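(* Let $d(z)=\sum_{k\ge0}d_kz^{-k-1}$ be a formal Laurent series and $P(z)=\sum_{\alpha=0}^{m} c_{\alpha,1}z^\alpha$, $Q(z)=\sum_{\alpha=0}^{m} c_{\alpha,0}z^\alpha$ complex polynomials with $c_{m,1}\ne0$, $m\ge1$, $\deg Q<m$. Suppose that the initial data are $\varphi(x,y)=\operatorname{Res}\{d(\xi)(Q(\xi)/P(\xi))^y\xi^x\}$ for $(x,y)\in\mathbb Z_+^2$ with $x<m$ or $y=0$ (with $Q/P$ expanded at $\xi=\infty$). Define $\Phi_k(w)=\sum_{y\ge1}\varphi(k,y)w^{-y-1}$ for $0\le k\le m-1$ and $R_{k+1}(z,w)=z^{-k-1}\sum_{\alpha=k+1}^{m}(c_{\alpha,1}w-c_{\alpha,0})z^\alpha$. Then $$\sum_{k=0}^{m-1}R_{k+1}(z,w)\Phi_k(w)-\frac1w\sum_{\alpha=0}^{m-1}\sum_{x=0}^{\alpha-1}c_{\alpha,0}\,\varphi(x,0)\,z^{\alpha-x-1}=0,$$ so that the generating function of the solution of the Cauchy problem is $\mathcal D(z,w)=\dfrac{P(z)d(z)}{P(z)w-Q(z)}$.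
   Context: $\mathbb Z_+$ denotes the nonnegative integers; $\operatorname{Res}$ of a formal Laurent series in $\xi$ is its coefficient of $\xi^{-1}$. The Cauchy problem is: $\sum_{\alpha=0}^{m} c_{\alpha,1} r(x+\alpha,y+1)-\sum_{\alpha=0}^{m} c_{\alpha,0} r(x+\alpha,y)=0$ for all $x,y\ge0$, and $r(x,y)=\varphi(x,y)$ whenever $x<m$ or $y=0$; $\mathcal D(z,w)=\sum_{(x,y)\in\mathbb Z_+^2}r(x,y)z^{-x-1}w^{-y-1}$. *)

(* Defs.v *)
From HB Require Import structures.
From mathcomp Require Import all_boot all_order all_algebra.
Set Implicit Arguments. Unset Strict Implicit. Unset Printing Implicit Defensive.
Import Order.TTheory GRing.Theory Num.Theory.
Local Open Scope ring_scope.

Section Series.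
Variable R : comNzRingType.

(* ---------- one-variable formal power series in xi^{-1} ----------
   a : pser  represents  sum_{n>=0} a n * xi^{-n}  (expansion at xi = oo) *)
Definition pser := nat -> R.
Definition pser_mul (a b : pser) : pser :=
  fun n => \sum_(i < n.+1) a i * b (n - i)%N.
Definition pser_one : pser := fun n => (n == 0%N)%:R.
Fixpoint pser_exp (a : pser) (y : nat) : pser :=
  if y is y'.+1 then pser_mul a (pser_exp a y') else pser_one.
Definition pser_coef (a : pser) (e : int) : R :=
  match e with Posz 0 => a 0%N | Posz _ => 0 | Negz n => a n.+1 end.
(* d(xi) = sum_{k>=0} d_k xi^{-k-1}, as a power series in xi^{-1} *)
Definition pser_of_d (d : nat -> R) : pser :=
  fun n => if n is n'.+1 then d n' else 0.

(* g is the expansion of Q/P at xi = oo : the series g in xi^{-1} with P*g = Q *)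
Definition expansion_at_infty (P Q : {poly R}) (g : pser) : Prop :=
  forall j : int,
    \sum_(a < size P) P`_a * pser_coef g (j - a%:Z)
    = (match j with Posz n => Q`_n | Negz _ => 0 end).

(* Initial data: phi(x,y) = Res { d(xi) (Q(xi)/P(xi))^y xi^x },
   where g is the expansion of Q/P at infinity.
   Res { h(xi) xi^x } = coefficient of xi^{-1-x} in h. *)
Definition phi (d g : nat -> R) (x y : nat) : R :=
  pser_coef (pser_mul (pser_of_d d) (pser_exp g y)) (- 1 - x%:Z).

(* ---------- two-variable formal series ----------
   s : ser2,  s i j = coefficient of z^i w^j  (i j : int) *)
Definition ser2 := int -> int -> R.

(* product of a polynomial p(z,w) by a formal series s(z,w);
   p : {poly {poly R}}, with (p`_b)`_a the coefficient of z^a w^b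
   (outer variable w, inner variable z) *)
Definition pmul2 (p : {poly {poly R}}) (s : ser2) : ser2 :=
  fun i j => \sum_(b < size p) \sum_(a < size (p`_b))
               (p`_b)`_a * s (i - a%:Z) (j - b%:Z).

Definition winv (s : ser2) : ser2 := fun i j => s i (j + 1).

Definition ser2_of_zpoly (p : {poly R}) : ser2 :=
  fun i j => if j == 0 then (match i with Posz n => p`_n | Negz _ => 0 end)
             else 0.

(* d(z) = sum_{k>=0} d_k z^{-k-1} ;  note Negz k = -k-1 *)
Definition dser (d : nat -> R) : ser2 :=
  fun i j => if j == 0 then (match i with Negz k => d k | _ => 0 end) else 0.

(* D(z,w) = sum_{x,y>=0} r(x,y) z^{-x-1} w^{-y-1} *)
Definition Dser (r : nat -> nat -> R) : ser2 :=
  fun i j => match i, j with Negz x, Negz y => r x y | _, _ => 0 end.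

(* Phi_k(w) = sum_{y>=1} phi(k,y) w^{-y-1} *)
Definition Phi (ph : nat -> nat -> R) (k : nat) : ser2 :=
  fun i j => if i == 0 then
               (match j with Negz y => if (1 <= y)%N then ph k y else 0
                           | Posz _ => 0 end)
             else 0.

Definition Ppoly (m : nat) (c1 : nat -> R) : {poly R} := \poly_(a < m.+1) c1 a.
Definition Qpoly (m : nat) (c0 : nat -> R) : {poly R} := \poly_(a < m.+1) c0 a.

(* R_{k+1}(z,w) = z^{-k-1} sum_{a=k+1}^m (c1 a w - c0 a) z^a *)
Definition Rpoly (m : nat) (c1 c0 : nat -> R) (k : nat) : {poly {poly R}} :=
  \sum_(k.+1 <= a < m.+1)
     ('X * (c1 a *: 'X^(a - k.+1))%:P - (c0 a *: 'X^(a - k.+1))%:P).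

Definition Spoly (m : nat) (c0 : nat -> R) (ph : nat -> nat -> R) : {poly R} :=
  \sum_(a < m) \sum_(x < a) (c0 a * ph x 0%N) *: 'X^(a - x - 1).

Definition PwQ (m : nat) (c1 c0 : nat -> R) : {poly {poly R}} :=
  'X * (Ppoly m c1)%:P - (Qpoly m c0)%:P.

Definition cauchy_solution (m : nat) (c1 c0 : nat -> R)
    (ph r : nat -> nat -> R) : Prop :=
  (forall x y : nat,
     \sum_(a < m.+1) c1 a * r (x + a)%N y.+1
     - \sum_(a < m.+1) c0 a * r (x + a)%N y = 0)
  /\ (forall x y : nat, (x < m)%N \/ y = 0%N -> r x y = ph x y).

End Series.

(* Main.v *)
Require Import Defs.
From HB Require Import structures.
From mathcomp Require Import all_boot all_order all_algebra zify.
Import Order.TTheory GRing.Theory Num.Theory.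
Local Open Scope ring_scope.


Lemma sum_delta (R : nzRingType) (n j : nat) (F : nat -> R) :
  \sum_(x < n) (if (x == j :> nat) then F x else 0) = if (j < n)%N then F j else 0.
Proof.
case: ltnP => h.
  rewrite (bigD1 (Ordinal h)) //= eqxx big1 ?addr0 // => x hx.
  case: eqP => // e; case/negP: hx; apply/eqP/val_inj; exact: e.
rewrite big1 // => x _; case: eqP => // e.
by have := ltn_ord x; rewrite e ltnNge h.
Qed.

Lemma sum_widen (R : nzRingType) (n N : nat) (F : nat -> R) :
  (n <= N)%N -> \sum_(x < n) F x = \sum_(x < N) (if (x < n)%N then F x else 0).
Proof. by move=> h; rewrite (big_ord_widen N F h) big_mkcond. Qed.

Lemma sum_shift (R : nzRingType) (m s : nat) (F : nat -> R) :
  \sum_(a < m.+1) (if (s < a)%N then F a else 0) = \sum_(k < m - s) F (k + s.+1)%N.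
Proof.
rewrite -big_mkcond /= -(big_mkord (fun a => s < a)%N F).
case: (leqP m s) => hms.
  rewrite (big_nat_cond 0 +%R) big1; last by move=> a /andP [/andP [_ ha] hb]; lia.
  by rewrite (_ : (m - s = 0)%N) ?big_ord0 //; lia.
rewrite (big_cat_nat (n := s.+1)) //=; last lia.
rewrite (big_nat_cond 0 +%R 0 s.+1) big1; last first.
  by move=> a /andP [/andP [_ ha] hb]; lia.
rewrite add0r -{1}(add0n s.+1) big_addn.
rewrite (_ : (m.+1 - s.+1 = m - s)%N) //.
rewrite big_mkcond big_mkord /=; apply: eq_bigr => i _; rewrite ifT //; lia.
Qed.

Lemma zsub_nat (s a : nat) : (s%:Z - a%:Z) = if (s < a)%N then Negz (a - s.+1) else Posz (s - a).
Proof.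
case: ltnP => h.
  by rewrite -opprB subzn ?(ltnW h) // NegzE subnSK.
by rewrite subzn.
Qed.

Lemma zsub_neg (x a : nat) : (Negz x - a%:Z) = Negz (x + a).
Proof. by rewrite !NegzE -opprD -PoszD addSn. Qed.

Lemma zsub_eq0 (s t : nat) : (s%:Z - t%:Z == 0) = (s == t).
Proof. by rewrite subr_eq0 eqz_nat. Qed.

Lemma coefg (R : comNzRingType) (g : nat -> R) (x a : nat) :
  pser_coef g (x%:Z - a%:Z) = if (x <= a)%N then g (a - x)%N else 0.
Proof.
rewrite zsub_nat; case: (ltnP x a) => h.
  by rewrite ltnW //=; congr g; lia.
case: (ltnP a x) => h2.
  by rewrite (_ : (x - a = (x - a).-1.+1)%N) //; lia.
have e : x = a by lia.
by rewrite e subnn.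
Qed.



Lemma pexp_coef (R : comNzRingType) (g : nat -> R) N y n :
  (n < N)%N -> pser_exp g y n = ((\poly_(i < N) g i) ^+ y)`_n.
Proof.
elim: y n => [|y IH] n hn /=.
  by rewrite expr0 coef1.
rewrite /pser_mul exprS coefM; apply: eq_bigr => i _.
have hi : (i < N)%N by have := ltn_ord i; lia.
rewrite coef_poly hi IH //; lia.
Qed.

Lemma phi_coef (R : comNzRingType) (d g : nat -> R) N x y :
  (x.+1 < N)%N -> phi d g x y =
   ((\poly_(i < N) pser_of_d d i) * (\poly_(i < N) g i) ^+ y)`_x.+1.
Proof.
move=> hx; rewrite /phi.
have -> : (-1 - x%:Z) = Negz x by rewrite NegzE intS opprD.
rewrite /= /pser_mul coefM; apply: eq_bigr => i _.
have hi : (i < N)%N by have := ltn_ord i; lia.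
rewrite coef_poly hi (@pexp_coef _ _ N) //; lia.
Qed.

Lemma key_abs (R : comNzRingType) (m s : nat) (c1 c0 g : nat -> R) (H : {poly R}) :
  H`_0 = 0 ->
  (forall n, (1 <= n)%N -> (n + s <= m)%N ->
     \sum_(k < m - s) (if (n <= k.+1)%N then c1 (k + s.+1)%N * g (k.+1 - n)%N else 0)
     = c0 (n + s)%N) ->
  \sum_(k < m - s) (c1 (k + s.+1)%N * (\sum_(n < k.+2) g (k.+1 - n)%N * H`_n)
                     - c0 (k + s.+1)%N * H`_k.+1) = 0.
Proof.
move=> H0 Hexp.
set M := (m - s)%N.
transitivity (\sum_(k < M) \sum_(n < M.+1)
   ((if (n <= k.+1)%N then c1 (k + s.+1)%N * g (k.+1 - n)%N else 0) * H`_n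
    - (if (n == k.+1 :> nat) then c0 (k + s.+1)%N else 0) * H`_n)).
  apply: eq_bigr => k _.
  have hk := ltn_ord k.
  rewrite sumrB; congr (_ - _).
    rewrite big_distrr /= (@sum_widen _ _ M.+1 (fun i => c1 (k + s.+1)%N * (g (k.+1 - i)%N * H`_i))) /=; last lia.
    apply: eq_bigr => n _; rewrite ltnS; case: ifP => _; rewrite ?mul0r ?mulrA //.
  transitivity (\sum_(i < M.+1) (if (i == k.+1 :> nat) then c0 (k + s.+1)%N * H`_i else 0)); last first.
    by apply: eq_bigr => i _; case: ifP; rewrite ?mul0r.
  by rewrite (@sum_delta _ M.+1 k.+1 (fun i => c0 (k + s.+1)%N * H`_i)) ltnS hk.
rewrite exchange_big /= big1 // => n _.
rewrite sumrB -!mulr_suml.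
case: n => [[|n] hn] /=.
  by rewrite H0 !mulr0 subrr.
have := @sum_delta _ M n (fun k => c0 (k + s.+1)%N).
rewrite (_ : (n < M)%N); last lia.
move=> hd.
rewrite [X in _ - X * _](eq_bigr (fun x : 'I_M => if (x == n :> nat) then c0 (x + s.+1)%N else 0)); last first.
  by move=> i _; rewrite eqSS eq_sym.
rewrite hd; rewrite Hexp //; last lia.
by rewrite (_ : (n + s.+1 = n.+1 + s)%N) ?subrr //; lia.
Qed.



Lemma exp_nat (R : comNzRingType) (m : nat) (c1 c0 g : nat -> R) (J : nat) :
  c1 m != 0 -> (J <= m)%N ->
  expansion_at_infty (Ppoly m c1) (Qpoly m c0) g ->
  \sum_(a < m.+1) c1 a * (if (J <= a)%N then g (a - J)%N else 0) = c0 J.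
Proof.
move=> hc hJ hexp.
have := hexp (Posz J).
rewrite /Ppoly /Qpoly size_poly_eq //= coef_poly ltnS hJ => <-.
by apply: eq_bigr => a _; rewrite coef_poly ltn_ord coefg.
Qed.

Lemma key (R : comNzRingType) (m : nat) (c1 c0 d g : nat -> R) (s y : nat) :
  c1 m != 0 -> expansion_at_infty (Ppoly m c1) (Qpoly m c0) g ->
  \sum_(k < m - s) (c1 (k + s.+1)%N * phi d g k y.+1 - c0 (k + s.+1)%N * phi d g k y) = 0.
Proof.
move=> hc hexp.
set Dp := \poly_(i < m.+2) pser_of_d d i.
set Gp := \poly_(i < m.+2) g i.
set H := Dp * Gp ^+ y.
rewrite -[RHS](@key_abs R m s c1 c0 g H); last first.
- move=> n hn hns.
  rewrite -(@exp_nat R m c1 c0 g _ hc hns hexp).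
  rewrite (eq_bigr (fun a : 'I_m.+1 => if (s < a)%N then c1 a * (if (n + s <= a)%N then g (a - (n + s))%N else 0) else 0)); last first.
    by move=> a _; case: (ltnP s a) => h //; rewrite ifF ?mulr0 //; lia.
  rewrite (@sum_shift _ m s (fun a => c1 a * (if (n + s <= a)%N then g (a - (n + s))%N else 0))).
  apply: eq_bigr => k _.
  rewrite (_ : (n + s <= k + s.+1)%N = (n <= k.+1)%N); last lia.
  case: ifP => h; last by rewrite mulr0.
  by rewrite (_ : (k + s.+1 - (n + s) = k.+1 - n)%N) //; lia.
- rewrite /H coefM big_ord_recl big_ord0 addr0 coef_poly /=.
  by rewrite mul0r.
apply: eq_bigr => k _.
have hk : (k.+1 < m.+2)%N by have := ltn_ord k; lia.
rewrite !(@phi_coef _ d g m.+2) // exprS mulrCA -/Dp -/Gp -/H coefMr.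
congr (_ * _ - _); apply: eq_bigr => j _.
by rewrite coef_poly (_ : (k.+1 - j < m.+2)%N) //; lia.
Qed.



Lemma pmul2E (R : comNzRingType) (p : {poly {poly R}}) (s : ser2 R) (B A : nat) (i j : int) :
  (size p <= B)%N -> (forall b : nat, leq (size (p`_b)) A) ->
  pmul2 p s i j = \sum_(b < B) \sum_(a < A) (p`_b)`_a * s (i - a%:Z) (j - b%:Z).
Proof.
move=> hB hA; rewrite /pmul2.
rewrite (@sum_widen _ _ B (fun b => \sum_(a < size p`_b) (p`_b)`_a * s (i - a%:Z) (j - b%:Z))) //.
apply: eq_bigr => b _.
rewrite (@sum_widen _ _ A (fun a => (p`_b)`_a * s (i - a%:Z) (j - b%:Z))) //.
case: ifP => hb.
  apply: eq_bigr => a _; case: ifP => // /negbT; rewrite -leqNgt => ha.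
  by rewrite nth_default // mul0r.
rewrite nth_default; last by rewrite leqNgt hb.
by rewrite big1 // => a _; rewrite coef0 mul0r.
Qed.

Lemma zsum_coef (R : comNzRingType) (c : nat -> R) (k m t : nat) :
  (\sum_(k.+1 <= a < m.+1) c a *: 'X^(a - k.+1))`_t = if (t < m - k)%N then c (t + k.+1)%N else 0.
Proof.
rewrite coef_sum.
under eq_bigr do rewrite coefZ coefXn.
rewrite -{1}(add0n k.+1) big_addn (_ : (m.+1 - k.+1 = m - k)%N) // big_mkord.
rewrite -(@sum_delta _ (m - k) t (fun i => c (i + k.+1)%N)).
by apply: eq_bigr => i _; rewrite addnK eq_sym; case: eqP; rewrite ?mulr0 ?mulr1.
Qed.

Lemma Rcoef (R : comNzRingType) m (c1 c0 : nat -> R) k b :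
  (Rpoly m c1 c0 k)`_b = if b == 0%N then - \sum_(k.+1 <= a < m.+1) (c0 a *: 'X^(a - k.+1))
     else if b == 1%N then \sum_(k.+1 <= a < m.+1) (c1 a *: 'X^(a - k.+1)) else 0.
Proof.
rewrite /Rpoly coef_sum.
under eq_bigr do rewrite coefB coefXM !coefC.
case: b => [|[|b]] /=.
- by rewrite -sumrN; apply: eq_bigr => a _; rewrite sub0r.
- by apply: eq_bigr => a _; rewrite subr0.
- by rewrite big1 // => a _; rewrite subr0.
Qed.

Definition W {R : comNzRingType} (ph : nat -> nat -> R) (k : nat) (J : int) : R :=
  match J with Negz y => if (1 <= y)%N then ph k y else 0 | Posz _ => 0 end.

Lemma sum_pick (R : comNzRingType) (n s : nat) (f : nat -> R) (w : R) :
  \sum_(a < n) f a * (if s == a then w else 0) = if (s < n)%N then f s * w else 0.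
Proof.
rewrite -(@sum_delta _ n s (fun a => f a * w)).
by apply: eq_bigr => a _; rewrite eq_sym; case: eqP => [->|]; rewrite ?mulr0.
Qed.

Lemma sum_cut (R : comNzRingType) (m s : nat) (G : nat -> R) :
  \sum_(k < m) (if (s < m - k)%N then G k else 0) = \sum_(k < m - s) G k.
Proof.
rewrite (@sum_widen _ (m - s) m) ?leq_subr //.
by apply: eq_bigr => k _; rewrite (_ : (s < m - k)%N = (k < m - s)%N) //; lia.
Qed.

Lemma Scoef (R : comNzRingType) m (c0 : nat -> R) ph s :
  c0 m = 0 ->
  (Spoly m c0 ph)`_s = \sum_(k < m - s) c0 (k + s.+1)%N * ph k 0%N.
Proof.
move=> hm; rewrite /Spoly coef_sum.
transitivity (\sum_(a < m.+1) (if (s < a)%N then c0 a * ph (a - s.+1)%N 0%N else 0)); last first.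
  by rewrite (@sum_shift _ m s (fun a => c0 a * ph (a - s.+1)%N 0%N)); apply: eq_bigr => k _; rewrite addnK.
rewrite big_ord_recr /= hm mul0r if_same addr0.
apply: eq_bigr => a _; rewrite coef_sum.
under eq_bigr do rewrite coefZ coefXn.
case: ltnP => h.
  transitivity (if (a - s.+1 < a)%N then c0 a * ph (a - s.+1)%N 0%N else 0); last by rewrite ifT //; lia.
  rewrite -(@sum_delta _ a (a - s.+1) (fun x => c0 a * ph x 0%N)).
  apply: eq_bigr => x _; have := ltn_ord x => hx.
  rewrite (_ : (s == (a - x - 1)%N) = (x == (a - s.+1)%N :> nat)); last lia.
  by case: eqP; rewrite ?mulr0 ?mulr1.
rewrite big1 // => x _; have := ltn_ord x => hx.
by rewrite (_ : (s == (a - x - 1)%N) = false) ?mulr0 //; lia.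
Qed.

Lemma pmulR (R : comNzRingType) m (c1 c0 : nat -> R) ph k i j :
  pmul2 (Rpoly m c1 c0 k) (Phi ph k) i j =
  match i with
  | Posz s => if (s < m - k)%N then c1 (s + k.+1)%N * W ph k (j - 1%:Z)
                                    - c0 (s + k.+1)%N * W ph k j else 0
  | Negz _ => 0 end.
Proof.
rewrite (@pmul2E _ _ _ 2 m).
- rewrite big_ord_recl big_ord1 /= !Rcoef /=.
  case: i => [s|n].
  + rewrite /Phi.
    under eq_bigr do rewrite coefN zsum_coef zsub_eq0.
    under [X in _ + X = _]eq_bigr do rewrite zsum_coef zsub_eq0.
    rewrite (@sum_pick _ m s (fun a => - (if (a < m - k)%N then c0 (a + k.+1)%N else 0))).
    rewrite (@sum_pick _ m s (fun a => (if (a < m - k)%N then c1 (a + k.+1)%N else 0))).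
    rewrite subr0.
    case: (ltnP s (m - k)) => h.
      rewrite (_ : (s < m)%N = true); last lia.
      by rewrite /W mulNr addrC.
    by rewrite oppr0 !mul0r !if_same addr0.
  + rewrite big1; last by move=> a _; rewrite /Phi zsub_neg /= mulr0.
    by rewrite big1 ?addr0 // => a _; rewrite /Phi zsub_neg /= mulr0.
- apply/leq_sizeP => b hb; rewrite Rcoef.
  case: b hb => [|[|b]] hb //.
- move=> b; apply/leq_sizeP => t ht; rewrite Rcoef.
  case: b => [|[|b]] /=.
  + by rewrite coefN zsum_coef ifF ?oppr0 //; lia.
  + by rewrite zsum_coef ifF //; lia.
  + by rewrite coef0.
Qed.


Lemma pmulPwQ (R : comNzRingType) m (c1 c0 : nat -> R) r i j :
  pmul2 (PwQ m c1 c0) (Dser r) i j =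
  \sum_(a < m.+1) c1 a * Dser r (i - a%:Z) (j - 1%:Z)
  - \sum_(a < m.+1) c0 a * Dser r (i - a%:Z) j.
Proof.
rewrite (@pmul2E _ _ _ 2 m.+1).
- rewrite big_ord_recl big_ord1 /=.
  have e0 : (PwQ m c1 c0)`_0 = - Qpoly m c0.
   by rewrite /PwQ coefB coefXM /= (coefC (Qpoly m c0)) /= sub0r.
  have e1 : (PwQ m c1 c0)`_1 = Ppoly m c1 by rewrite /PwQ coefB coefXM /= (coefC (Ppoly m c1)) (coefC (Qpoly m c0)) /= subr0.
  change (bump 0 0) with 1%N; rewrite e0 e1 subr0 addrC -sumrN.
  congr (_ + _); apply: eq_bigr => a _.
  + by rewrite /Ppoly coef_poly ltn_ord.
  + by rewrite coefN /Qpoly coef_poly ltn_ord mulNr.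
- apply/leq_sizeP => b hb; rewrite /PwQ coefB coefXM (coefC (Ppoly m c1)) (coefC (Qpoly m c0)).
  by case: b hb => [|[|b]] hb //=; rewrite subrr.
- move=> b; apply/leq_sizeP => t ht; rewrite /PwQ coefB coefXM (coefC (Ppoly m c1)) (coefC (Qpoly m c0)).
  case: b => [|[|b]] /=.
  + by rewrite sub0r coefN /Qpoly coef_poly ifF ?oppr0 //; lia.
  + by rewrite subr0 /Ppoly coef_poly ifF //; lia.
  + by rewrite subrr coef0.
Qed.

Lemma pmulPd (R : comNzRingType) m (c1 : nat -> R) d i j :
  pmul2 (Ppoly m c1)%:P (dser d) i j = \sum_(a < m.+1) c1 a * dser d (i - a%:Z) j.
Proof.
rewrite (@pmul2E _ _ _ 1 m.+1) ?size_polyC_leq1 //.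
- rewrite big_ord1 /=; apply: eq_bigr => a _.
  by rewrite coefC /= /Ppoly coef_poly ltn_ord subr0.
- move=> b; rewrite coefC; case: ifP => _; last by rewrite size_poly0.
  exact: size_poly.
Qed.

Lemma phi0 (R : comNzRingType) (d g : nat -> R) x : phi d g x 0 = d x.
Proof.
by rewrite (@phi_coef _ d g x.+2) // expr0 mulr1 coef_poly ltnSn.
Qed.

Lemma W_pos (R : comNzRingType) (ph : nat -> nat -> R) k (J : nat) : W ph k (J%:Z - 1%:Z) = 0.
Proof.
by rewrite zsub_nat; case: ltnP.
Qed.

Lemma posz_add1 (J : nat) : (J%:Z + 1 == 0) = false.
Proof. by rewrite -[1]/(1%:Z) -PoszD eqz_nat addn1. Qed.

Lemma negz_add1 (y : nat) : (Negz y + 1) = - y%:Z.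
Proof. by rewrite NegzE intS opprD addrAC addNr add0r. Qed.



Theorem mainTheorem4 (R : numClosedFieldType) (m : nat)
    (c1 c0 d g : nat -> R) :
  (1 <= m)%N -> c1 m != 0 -> (size (Qpoly m c0) <= m)%N ->
  expansion_at_infty (Ppoly m c1) (Qpoly m c0) g ->
  (forall i j : int,
     \sum_(k < m) pmul2 (Rpoly m c1 c0 k) (Phi (phi d g) k) i j
     - winv (ser2_of_zpoly (Spoly m c0 (phi d g))) i j = 0)
  /\ (forall r : nat -> nat -> R, cauchy_solution m c1 c0 (phi d g) r ->
      forall i j : int,
        pmul2 (PwQ m c1 c0) (Dser r) i j
        = pmul2 (Ppoly m c1)%:P (dser d) i j).
Proof.
move=> hm hc hQ hexp.
have c0m : c0 m = 0.
  have := nth_default 0 hQ; rewrite /Qpoly coef_poly ltnSn => <-. by [].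
have K s y : \sum_(k < m - s) (c1 (s + k.+1)%N * phi d g k y.+1
                 - c0 (s + k.+1)%N * phi d g k y) = 0.
  rewrite -[X in _ = X](@key R m c1 c0 d g s y hc hexp).
  by apply: eq_bigr => k _; rewrite (_ : (s + k.+1 = k + s.+1)%N) //; lia.
split.
- move=> i j; rewrite /winv /ser2_of_zpoly.
  under eq_bigr do rewrite pmulR.
  case: i => [s|n]; last by rewrite big1 //= if_same subr0.
  rewrite (@sum_cut _ m s (fun k => c1 (s + k.+1)%N * W (phi d g) k (j - 1%:Z)
                                  - c0 (s + k.+1)%N * W (phi d g) k j)).
  case: j => [J|y].
  + rewrite posz_add1 subr0 big1 // => k _.
    by rewrite W_pos /W !mulr0 subrr.
  + under eq_bigr do rewrite zsub_neg addn1.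
    case: y => [|y].
    * rewrite negz_add1 oppr0 eqxx Scoef //.
      have := K s 0%N; rewrite sumrB => /eqP; rewrite subr_eq0 => /eqP hh.
      transitivity (\sum_(k < m - s) c1 (s + k.+1)%N * phi d g k 1
                    - \sum_(k < m - s) c0 (s + k.+1)%N * phi d g k 0); last by rewrite hh subrr.
      congr (_ - _); apply: eq_bigr => k _.
        by rewrite /W /= mulr0 subr0.
      by rewrite (_ : (k + s.+1 = s + k.+1)%N) //; lia.
    * rewrite negz_add1 oppr_eq0 eqz_nat /= subr0 -[X in _ = X](K s y.+1).
      by apply: eq_bigr.
- move=> r [hrec hinit] i j.
  rewrite pmulPwQ pmulPd.
  case: j => [[|J]|y].
  + rewrite (_ : (Posz 0 - 1%:Z) = Negz 0) //.
    rewrite [X in _ - X = _]big1 ?subr0; last first.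
      by move=> a _; case: (i - a%:Z) => [n|x] /=; rewrite mulr0.
    apply: eq_bigr => a _; case: (i - a%:Z) => [n|x] //=.
    by rewrite hinit ?phi0 //; right.
  + rewrite (_ : (Posz J.+1 - 1%:Z) = Posz J); last by rewrite zsub_nat /= subn1.
    rewrite !big1 ?subr0 // => a _; case: (i - a%:Z) => [n|x] /=; rewrite ?mulr0 //.
  + rewrite zsub_neg addn1 [RHS]big1; last by move=> a _; rewrite /dser (_ : (Negz y == 0) = false) // mulr0.
    case: i => [s|x].
    * under eq_bigr do rewrite zsub_nat.
      under [X in _ - X = _]eq_bigr do rewrite zsub_nat.
      rewrite (eq_bigr (fun a : 'I_m.+1 => if (s < a)%N then c1 a * r (a - s.+1)%N y.+1 else 0)); last first.
        by move=> a _; case: ifP; rewrite /= ?mulr0.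
      rewrite [X in _ - X = _](eq_bigr (fun a : 'I_m.+1 => if (s < a)%N then c0 a * r (a - s.+1)%N y else 0)); last first.
        by move=> a _; case: ifP; rewrite /= ?mulr0.
      rewrite (@sum_shift _ m s (fun a => c1 a * r (a - s.+1)%N y.+1)).
      rewrite (@sum_shift _ m s (fun a => c0 a * r (a - s.+1)%N y)).
      rewrite -sumrB -[X in _ = X](K s y); apply: eq_bigr => k _.
      have hk : (k < m)%N by have := ltn_ord k; lia.
      rewrite addnK !hinit; try by left.
      by rewrite (_ : (k + s.+1 = s + k.+1)%N) //; lia.
    * under eq_bigr do rewrite zsub_neg.
      under [X in _ - X = _]eq_bigr do rewrite zsub_neg.
      exact: hrec.
Qed.
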